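(* Let $W$ be a vector lattice carrying a faithful positive linear functional $\psi$. Assume that $W$ is monotone sequentially complete, and that $V$ is a monotone sequentially closed subset of $W$. Then $W$ is monotone complete, and $V$ is monotone closed in $W$. Moreover, the following monotone selection principle holds: whenever $J$ is a non-empty upward directed subset of $V$ that is upper bounded in $W$, there exists an increasing sequence $(j_n)$ in $J$ with $\sup_n j_n = \sup J$ in $W$; in fact every increasing sequence $(j_n)$ in $J$ with $\sup_n \psi(j_n) = \sup_{j\in J}\psi(j)$ satisfies $\sup_n j_n = \sup J$ in $W$, and also $\sup_n j_n = \sup J$ in $V$.
   Context: Let $W$ be an ordered (real) vector space with positive cone $W_+$. $W$ is called monotone complete if every non-empty upward directed subset of $W$ that is bounded above has a supremum in $W$; $W$ is called monotone sequentially complete if every increasing sequence in $W$ that is bounded above has a supremum in $W$. If $W$ is monotone complete, a subset $V\subseteq W$ is called monotone closed in $W$ if $V$ contains the supremum in $W$ of every non-empty upward directed subset of $V$ that is upper bounded in $W$. If $W$ is monotone sequentially complete, $V\subseteq W$ is called monotone sequentially closed in $W$ if $V$ contains the supremum in $W$ of every increasing sequence in $V$ that is upper bounded in $W$. A positive linear functional $\psi$ on $W$ is called faithful if $\psi(a)>0$ for every $a\in W_+\setminus\{0\}$. *)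

(* Defs.v *)
From HB Require Import structures.
From mathcomp Require Import all_boot all_order all_algebra.
From mathcomp Require Import boolp classical_sets reals.
Set Implicit Arguments. Unset Strict Implicit. Unset Printing Implicit Defensive.
Import Order.TTheory GRing.Theory Num.Theory.
Local Open Scope ring_scope.
Local Open Scope classical_set_scope.

Section Defs.
Variables (R : realType) (W : lmodType R) (le : W -> W -> Prop).

Definition ordered_vector_space : Prop :=
  [/\ (forall x, le x x),
      (forall x y z, le x y -> le y z -> le x z),
      (forall x y, le x y -> le y x -> x = y),
      (forall x y z, le x y -> le (x + z) (y + z)) &
      (forall (a : R) x y, 0 <= a -> le x y -> le (a *: x) (a *: y))].

Definition upper_bound (A : set W) (u : W) : Prop := forall a, A a -> le a u.
Definition bounded_above (A : set W) : Prop := exists u, upper_bound A u.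

Definition is_sup (A : set W) (s : W) : Prop :=
  upper_bound A s /\ forall u, upper_bound A u -> le s u.

Definition is_sup_in (V : set W) (A : set W) (s : W) : Prop :=
  V s /\ upper_bound A s /\ forall u, V u -> upper_bound A u -> le s u.

Definition vector_lattice : Prop :=
  ordered_vector_space /\ forall x y, exists s, is_sup [set x; y] s.

Definition upward_directed (A : set W) : Prop :=
  forall a b, A a -> A b -> exists2 c, A c & le a c /\ le b c.

Definition increasing (u : nat -> W) : Prop := forall n, le (u n) (u n.+1).

Definition monotone_complete : Prop :=
  forall A : set W, A !=set0 -> upward_directed A -> bounded_above A ->
    exists s, is_sup A s.

Definition monotone_seq_complete : Prop :=
  forall u : nat -> W, increasing u -> bounded_above (range u) ->
    exists s, is_sup (range u) s.

Definition monotone_closed (V : set W) : Prop :=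
  forall A : set W, A `<=` V -> A !=set0 -> upward_directed A ->
    bounded_above A -> forall s, is_sup A s -> V s.

Definition monotone_seq_closed (V : set W) : Prop :=
  forall u : nat -> W, (forall n, V (u n)) -> increasing u ->
    bounded_above (range u) -> forall s, is_sup (range u) s -> V s.

Definition linear_functional (psi : W -> R) : Prop :=
  forall (a : R) x y, psi (a *: x + y) = a * psi x + psi y.

Definition positive_functional (psi : W -> R) : Prop :=
  linear_functional psi /\ forall x, le 0 x -> 0 <= psi x.

Definition faithful (psi : W -> R) : Prop :=
  forall x, le 0 x -> x <> 0 -> 0 < psi x.

End Defs.

(* Main.v *)
Require Import Defs.
From HB Require Import structures.
From mathcomp Require Import all_boot all_order all_algebra.
From mathcomp Require Import boolp classical_sets reals.
Import Order.TTheory GRing.Theory Num.Theory.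
Local Open Scope ring_scope.
Local Open Scope classical_set_scope.

Lemma psi_lemmas {R : realType} {W : lmodType R} {psi : W -> R} :
  linear_functional psi ->
  [/\ psi 0 = 0, (forall x y, psi (x + y) = psi x + psi y) &
      (forall x, psi (- x) = - psi x)].
Proof.
move=> L.
have h0 : psi 0 = 0.
  have := L 1 0 0; rewrite scale1r addr0 mul1r => h.
  by apply: (@addrI _ (psi 0)); rewrite addr0 -h.
have hD : forall x y, psi (x + y) = psi x + psi y.
  by move=> x y; rewrite -[x]scale1r L mul1r scale1r.
split=> // x; have := L (-1) x 0; rewrite addr0 h0 addr0 scaleN1r.
by rewrite mulN1r.
Qed.

Lemma le_sub {R : realType} {W : lmodType R} {le : W -> W -> Prop} {x y} :
  ordered_vector_space le -> le x y -> le 0 (y - x).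
Proof. by case=> _ _ _ hA _ h; have := hA _ _ (- x) h; rewrite subrr. Qed.

Lemma le_of_sub {R : realType} {W : lmodType R} {le : W -> W -> Prop} {x y} :
  ordered_vector_space le -> le 0 (y - x) -> le x y.
Proof. by case=> _ _ _ hA _ h; have := hA _ _ x h; rewrite add0r subrK. Qed.

Lemma psi_mono {R : realType} {W : lmodType R} {le : W -> W -> Prop} {psi x y} :
  ordered_vector_space le -> positive_functional le psi -> le x y -> psi x <= psi y.
Proof.
move=> O [L P] h; have [_ hD hN] := psi_lemmas L.
have := P _ (le_sub O h); rewrite hD hN subr_ge0 //.
Qed.

Lemma key {R : realType} {W : lmodType R} {le : W -> W -> Prop} {psi}
  {J : set W} {j : nat -> W} {t} :
  vector_lattice le -> positive_functional le psi -> faithful le psi ->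
  upward_directed le J -> (forall n, J (j n)) -> bounded_above le J ->
  sup (range (fun n => psi (j n))) = sup [set psi x | x in J] ->
  (forall n, le (j n) t) -> upper_bound le J t.
Proof.
move=> [O Lat] Pos F D Jj [u ub] hsup jt a Ja.
have [e [eub eleast]] := Lat (a - t) 0.
have [L _] := Pos; have [h0 hD hN] := psi_lemmas L.
have hubJ : has_ubound [set psi x | x in J].
  by exists (psi u) => _ [x Jx <-]; exact: (psi_mono O Pos (ub _ Jx)).
have Hn : forall n, psi e + psi (j n) <= sup [set psi x | x in J].
  move=> n; have [c Jc [ac jc]] := D _ _ Ja (Jj n).
  have ec : le e (c - j n).
    apply: eleast => _ [->|->].
    - case: (O) => _ tr _ _ _; apply: (tr _ (a - j n)).
        apply: le_of_sub => //.
        have -> : a - j n - (a - t) = t - j n.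
          by rewrite opprB addrC addrA subrK.
        exact: le_sub.
      by case: (O) => _ _ _ hA _; exact: hA.
    - exact: le_sub.
  apply: le_trans (ub_le_sup hubJ (ex_intro2 _ _ c Jc erefl)).
  have := psi_mono O Pos ec; rewrite hD hN.
  by rewrite lerBrDr.
have e_le : psi e <= 0.
  have : sup (range (fun n => psi (j n))) <= sup [set psi x | x in J] - psi e.
    apply: ge_sup; first by exists (psi (j 0)), 0%N.
    by move=> _ [n _ <-]; rewrite lerBrDl.
  by rewrite hsup lerBrDr gerDl.
have e0 : e = 0.
  apply/eqP; apply/negPn/negP => /eqP ne.
  have := F e (eub 0 (or_intror erefl)) ne.
  by rewrite ltNge e_le.
have := eub (a - t) (or_introl erefl); rewrite e0 => h.
by have := (let: And5 _ _ _ hA _ := O in hA) _ _ t h; rewrite add0r subrK.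
Qed.
Lemma exists_seq {R : realType} {W : lmodType R} {le : W -> W -> Prop} {psi : W -> R}
  {J : set W} :
  ordered_vector_space le -> positive_functional le psi ->
  J !=set0 -> upward_directed le J -> bounded_above le J ->
  exists j : nat -> W, [/\ (forall n, J (j n)), increasing le j &
    sup (range (fun n => psi (j n))) = sup [set psi x | x in J]].
Proof.
move=> O Pos [x0 Jx0] D [u ub].
have hubJ : has_ubound [set psi x | x in J].
  by exists (psi u) => _ [x Jx <-]; exact: (psi_mono O Pos (ub _ Jx)).
have hsJ : has_sup [set psi x | x in J].
  by split=> //; exists (psi x0), x0.
set al := sup [set psi x | x in J].
have : forall n : nat, exists b, J b /\ al - n.+1%:R^-1 < psi b.
  move=> n; have hp : (0 : R) < n.+1%:R^-1 by rewrite invr_gt0 ltr0n.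
  have [_ [b Jb <-] hb] := sup_adherent hp hsJ.
  by exists b.
case/choice => b hb.
have : forall p : W * W, exists c, J p.1 -> J p.2 -> J c /\ le p.1 c /\ le p.2 c.
  move=> [p q]; case: (pselect (J p /\ J q)) => [[Jp Jq]|nJ].
    by have [c Jc hc] := D _ _ Jp Jq; exists c.
  by exists 0 => Jp Jq; exfalso; apply: nJ.
case/choice => f hf.
pose j := fix j n := if n is n'.+1 then f (j n', b n) else b 0.
have Jj : forall n, J (j n).
  elim=> [|n IH] /=; first by case: (hb 0%N).
  by case: (hf (j n, b n.+1) IH (proj1 (hb n.+1))).
have inc : increasing le j.
  by move=> n /=; case: (hf (j n, b n.+1) (Jj n) (proj1 (hb n.+1))) => _ [].
have bj : forall n, psi (b n) <= psi (j n).
  case=> [|n] /=; first by [].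
  apply: (psi_mono O Pos).
  by case: (hf (j n, b n.+1) (Jj n) (proj1 (hb n.+1))) => _ [].
exists j; split => //.
have le1 : sup (range (fun n => psi (j n))) <= al.
  apply: ge_sup; first by exists (psi (j 0%N)), 0%N.
  by move=> _ [n _ <-]; apply: sup_upper_bound => //; exists (j n).
apply/eqP; rewrite eq_le le1 /=; rewrite leNgt; apply/negP => lt.
have [k hk] := ltr_add_invr lt.
have hr : has_ubound (range (fun n => psi (j n))).
  by exists al => _ [n _ <-]; apply: sup_upper_bound => //; exists (j n).
have := ub_le_sup hr (ex_intro2 _ _ k I erefl) => /= hjk.
have := proj2 (hb k); rewrite ltrBlDr => hbk.
have : al < psi (j k) + k.+1%:R^-1 by apply: lt_le_trans hbk _; rewrite lerD2r.
by rewrite ltNge (le_trans _ (ltW hk)) // lerD2r.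
Qed.

Theorem mainTheorem1 (R : realType) (W : lmodType R) (le : W -> W -> Prop)
  (psi : W -> R) (V : set W) :
  vector_lattice le ->
  positive_functional le psi -> faithful le psi ->
  monotone_seq_complete le ->
  monotone_seq_closed le V ->
  [/\ monotone_complete le,
      monotone_closed le V &
      forall J : set W, J `<=` V -> J !=set0 -> upward_directed le J ->
        bounded_above le J ->
        (exists j : nat -> W, [/\ (forall n, J (j n)), increasing le j &
            forall s, is_sup le J s -> is_sup le (range j) s]) /\
        (forall j : nat -> W, (forall n, J (j n)) -> increasing le j ->
           sup (range (fun n => psi (j n))) = sup [set psi x | x in J] ->
           forall s, is_sup le J s ->
             is_sup le (range j) s /\ is_sup_in le V (range j) s)].
Proof.
move=> VL Pos F MSC MSCl; have [O Lat] := VL.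
have P2 : forall (J : set W) (j : nat -> W), upward_directed le J -> bounded_above le J ->
    (forall n, J (j n)) ->
    sup (range (fun n => psi (j n))) = sup [set psi x | x in J] ->
    forall s, is_sup le J s -> is_sup le (range j) s.
  move=> J j D B Jj hs s [sub sl]; split.
  - by move=> _ [n _ <-]; exact: sub _ (Jj n).
  - move=> v vub; apply: sl; apply: (key VL Pos F D Jj B hs) => n.
    by apply: vub; exists n.
have MC : monotone_complete le.
  move=> A A0 D B; have [j [Jj inc hs]] := exists_seq O Pos A0 D B.
  have [t [tub tl]] : exists t, is_sup le (range j) t.
    apply: MSC inc _; case: B => u ub; exists u => _ [n _ <-]; exact: ub.
  exists t; split.
  - by apply: (key VL Pos F D Jj B hs) => n; apply: tub; exists n.
  - by move=> v vub; apply: tl => _ [n _ <-]; exact: vub.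
have JP : forall J : set W, J `<=` V -> upward_directed le J -> bounded_above le J ->
    forall j : nat -> W, (forall n, J (j n)) -> increasing le j ->
    sup (range (fun n => psi (j n))) = sup [set psi x | x in J] ->
    forall s, is_sup le J s -> is_sup le (range j) s /\ is_sup_in le V (range j) s.
  move=> J JV D B j Jj inc hs s hsJ.
  have hr := P2 J j D B Jj hs s hsJ.
  split => //; split; last by case: hr => h1 h2; split=> // v _; exact: h2.
  apply: (MSCl j (fun n => JV _ (Jj n)) inc _ s hr).
  by exists s; case: hr.
split => //.
- move=> A AV A0 D B s hs; have [j [Jj inc hj]] := exists_seq O Pos A0 D B.
  by have [_ []] := JP A AV D B j Jj inc hj s hs.
- move=> J JV J0 D B; split; last exact: JP.
  have [j [Jj inc hj]] := exists_seq O Pos J0 D B.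
  by exists j; split => // s hs; exact: P2 hs.
Qed.
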